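(* (a) For every real number $M>0$ there exist connected graphs $H$ and $G$ with $H$ a subgraph of $G$ such that $\frac{\textnormal{sdim}(H)}{\textnormal{sdim}(G)}>M$. (b) Let $G$ and $H$ be connected graphs. If $H_{\rm SR}$ is a subgraph of $G_{\rm SR}$, then $\textnormal{sdim}(H)\le \textnormal{sdim}(G)$.
   Context: All graphs are finite, simple and undirected; $d(x,y)$ is the shortest-path distance. A set $S\subseteq V(G)$ is a strong resolving set of a connected graph $G$ if for all distinct $x,y\in V(G)$ there exists $z\in S$ such that $x$ lies on a $y$–$z$ geodesic or $y$ lies on an $x$–$z$ geodesic; $\textnormal{sdim}(G)$ is the minimum cardinality of a strong resolving set. A vertex $u$ is maximally distant from $v$ if $d(u,v)\ge d(w,v)$ for every neighbor $w$ of $u$; $u$ and $v$ are mutually maximally distant (MMD) if each is maximally distant from the other. The strong resolving graph $G_{\rm SR}$ has vertex set $\{x\in V(G): x \text{ is MMD with some } y\in V(G)\}$, and $uv$ is an edge of $G_{\rm SR}$ iff $u$ and $v$ are MMD in $G$. *)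

(* Defs.v *)
From mathcomp Require Import all_boot.
Set Implicit Arguments. Unset Strict Implicit. Unset Printing Implicit Defensive.

Definition simple_graph (T : finType) (e : rel T) : Prop :=
  irreflexive e /\ symmetric e.

Definition connected_graph (T : finType) (e : rel T) : Prop :=
  simple_graph e /\ forall x y : T, connect e x y.

Fixpoint ball (T : finType) (e : rel T) (n : nat) (x : T) : {set T} :=
  match n with
  | 0 => [set x]
  | n'.+1 => ball e n' x :|: [set y | [exists z in ball e n' x, e z y]]
  end.

(* shortest-path distance (equals #|T| if y is unreachable, which never
   happens in a connected graph) *)
Definition dist (T : finType) (e : rel T) (x y : T) : nat :=
  find (fun n => y \in ball e n x) (iota 0 #|T|).

Definition on_geodesic (T : finType) (e : rel T) (x y z : T) : bool :=
  dist e y z == dist e y x + dist e x z.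

Definition strong_resolving (T : finType) (e : rel T) (S : {set T}) : bool :=
  [forall x, forall y, (x != y) ==>
     [exists z in S, on_geodesic e x y z || on_geodesic e y x z]].

(* sdim: minimum cardinality of a strong resolving set
   ([set: T] is always strong resolving, taking z := x). *)
Definition sdim (T : finType) (e : rel T) : nat :=
  #| [arg min_(S < [set: T] | strong_resolving e S) #|S| ] |.

Definition max_distant (T : finType) (e : rel T) (u v : T) : bool :=
  [forall w, e u w ==> (dist e w v <= dist e u v)].

(* mutually maximally distant (distinct) vertices = edges of G_SR *)
Definition mmd (T : finType) (e : rel T) (u v : T) : bool :=
  (u != v) && max_distant e u v && max_distant e v u.

Definition SR_vertex (T : finType) (e : rel T) (x : T) : bool :=
  [exists y, mmd e x y].

(* (the isomorphism type of) G1 is a subgraph of G2 *)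
Definition subgraph (T1 T2 : finType) (e1 : rel T1) (e2 : rel T2) : Prop :=
  exists f : T1 -> T2, injective f /\ forall x y, e1 x y -> e2 (f x) (f y).

Definition SR_subgraph (T1 T2 : finType) (e1 : rel T1) (e2 : rel T2) : Prop :=
  exists f : T1 -> T2,
    {in SR_vertex e1 &, injective f} /\
    (forall x, SR_vertex e1 x -> SR_vertex e2 (f x)) /\
    (forall x y, mmd e1 x y -> mmd e2 (f x) (f y)).

(* Main.v *)
Require Import Defs.
From mathcomp Require Import all_boot.
From Stdlib Require Import Reals.
From mathcomp Require Import zify.
From Stdlib Require Import Lra.
Local Notation dist := Defs.dist.
Set Implicit Arguments. Unset Strict Implicit.

Section Dist.
Variables (T : finType) (e : rel T).
Hypothesis esym : symmetric e.
Hypothesis conn : forall x y : T, connect e x y.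

Lemma ballS n x y : (y \in ball e n.+1 x) =
  (y \in ball e n x) || [exists z in ball e n x, e z y].
Proof. by rewrite /= in_setU in_set. Qed.

Lemma ball_rcons x p y : path e x (rcons p y) -> y \in ball e (size p).+1 x.
Proof.
elim/last_ind: p y => [|p a IH] y.
  move=> /andP [exy _]; rewrite ballS; apply/orP; right.
  by apply/existsP; exists x; rewrite /= in_set1 eqxx.
rewrite rcons_path => /andP [pa ey].
rewrite size_rcons ballS; apply/orP; right; apply/existsP; exists a.
rewrite last_rcons in ey; rewrite ey andbT; exact: IH.
Qed.

Lemma ball_path x p : path e x p -> last x p \in ball e (size p) x.
Proof.
case/lastP: p => [|p y]; first by rewrite /= in_set1.
by rewrite last_rcons size_rcons; apply: ball_rcons.
Qed.

Lemma reach x y : exists2 n, n < #|T| & y \in ball e n x.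
Proof.
have /connectP [p pp ->] := conn x y.
case/shortenP: pp => p' pp' up' _.
exists (size p'); last exact: ball_path.
have := card_uniqP up'; rewrite /= => H.
by have := max_card (mem (x :: p')); rewrite H.
Qed.

Lemma dist_spec x y : (dist e x y < #|T|) /\ y \in ball e (dist e x y) x.
Proof.
have [n ltn yn] := reach x y.
have hP : has (fun n => y \in ball e n x) (iota 0 #|T|).
  by apply/hasP; exists n => //; rewrite mem_iota.
split; first by have := hP; rewrite has_find size_iota.
have := nth_find 0 hP; rewrite -/(dist e x y) nth_iota //.
by have := hP; rewrite has_find size_iota.
Qed.

Lemma dist_min x y n : y \in ball e n x -> dist e x y <= n.
Proof.
move=> yn; rewrite leqNgt; apply/negP => lt.
have [lT _] := dist_spec x y.
have := before_find 0 lt; rewrite nth_iota ?yn //.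
by apply: ltn_trans lT.
Qed.

Lemma dist0 x : dist e x x = 0.
Proof. by apply/eqP; rewrite -leqn0 dist_min // in_set1. Qed.

Lemma dist0_eq x y : dist e x y = 0 -> y = x.
Proof. by move=> h; have [_] := dist_spec x y; rewrite h /= in_set1 => /eqP. Qed.

Lemma dist_edge x y z : e y z -> dist e x z <= (dist e x y).+1.
Proof.
move=> eyz; apply: dist_min; rewrite ballS; apply/orP; right.
by apply/existsP; exists y; rewrite eyz andbT; have [_] := dist_spec x y.
Qed.

Lemma dist_pred x y k : dist e x y = k.+1 -> exists z, e z y /\ dist e x z = k.
Proof.
move=> h; have [_] := dist_spec x y; rewrite h ballS => /orP [yk|].
  by have := @dist_min _ _ k yk; rewrite h ltnn.
case/existsP => z /andP [zk ezy]; exists z; split => //.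
have := @dist_min _ _ k zk; have := @dist_edge x _ _ ezy; rewrite h; lia.
Qed.

Lemma dist_tri x y z : dist e x z <= dist e x y + dist e y z.
Proof.
move Hk : (dist e y z) => k; elim: k z Hk => [|k IH] z Hk.
  by rewrite (dist0_eq Hk) addn0.
have [w [ewz dw]] := @dist_pred _ _ _ Hk.
have := IH w dw; have := @dist_edge x _ _ ewz; lia.
Qed.

Lemma dist_sym x y : dist e x y = dist e y x.
Proof.
suff H : forall x y, dist e y x <= dist e x y.
  by apply/eqP; rewrite eqn_leq !H.
move=> {}x {}y; move Hk : (dist e x y) => k; elim: k y Hk => [|k IH] y Hk.
  by rewrite (dist0_eq Hk) dist0.
have [z [ezy dz]] := @dist_pred _ _ _ Hk.
have := IH z dz; have := dist_tri y z x.
have eyz : e y z by rewrite esym.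
have := @dist_edge y _ _ eyz; rewrite dist0; lia.
Qed.


Lemma dist_pred_l x y k : dist e x y = k.+1 -> exists w, e x w /\ dist e w y = k.
Proof.
rewrite dist_sym => /dist_pred [w [ewx d]]; exists w.
by rewrite esym ewx dist_sym.
Qed.

Lemma maxd_geo u v z : (forall w, e u w -> dist e w v <= dist e u v) ->
  dist e v z = dist e v u + dist e u z -> z = u.
Proof.
move=> md h; move Hk : (dist e u z) h => k; case: k Hk => [|k] Hk h.
  exact: dist0_eq.
have [w [euw dw]] := dist_pred_l Hk.
move: h (md w euw) (dist_tri v w z).
rewrite (dist_sym v w) (dist_sym v u); lia.
Qed.

Lemma strong_cover (S : {set T}) : strong_resolving e S ->
  forall u v, mmd e u v -> (u \in S) || (v \in S).
Proof.
move=> /forallP sr u v /andP [/andP [nuv muv] mvu].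
have /implyP/(_ nuv)/existsP [z /andP [zS /orP [g|g]]] := forallP (sr u) v.
- have zu : z = u.
    apply: (maxd_geo (v:=v)); last by apply/eqP.
    by move=> w euw; have /implyP := forallP muv w; apply.
  by rewrite -zu zS.
- have zv : z = v.
    apply: (maxd_geo (v:=u)); last by apply/eqP.
    by move=> w evw; have /implyP := forallP mvu w; apply.
  by rewrite -zv zS orbT.
Qed.

Lemma cover_strong (S : {set T}) : (forall u v, mmd e u v -> (u \in S) || (v \in S)) ->
  strong_resolving e S.
Proof.
move=> cov; apply/forallP => x; apply/forallP => y; apply/implyP => nxy.
have gx : on_geodesic e x y x by rewrite /on_geodesic dist0 addn0.
case: (arg_maxnP (fun u => dist e y u) gx) => u /eqP Pu Mu.
have gy : on_geodesic e y u y by rewrite /on_geodesic dist0 addn0.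
case: (arg_maxnP (fun v => dist e u v) gy) => v /eqP Pv Mv.
have muv : mmd e u v.
  apply/andP; split; first (apply/andP; split).
  - apply/negP => /eqP uv; move: Pv Pu; rewrite -uv dist0 => Pv.
    have uy : dist e u y = 0 by lia.
    have := dist0_eq uy => <-; rewrite dist0 => Pu.
    have yx : dist e y x = 0 by lia.
    by move: nxy; rewrite (dist0_eq yx) eqxx.
  - apply/forallP => w; apply/implyP => euw; rewrite leqNgt; apply/negP => lt.
    have evw : dist e v w <= (dist e v u).+1 by apply: dist_edge.
    have t1 := dist_tri v y w; have t2 := dist_tri y x w.
    have t3 : dist e x w <= (dist e x u).+1 by apply: dist_edge.
    have g : on_geodesic e x y w.
      apply/eqP; move: lt evw t1 t2 t3 Pu Pv.
      rewrite (dist_sym v w) (dist_sym v u) (dist_sym v y) (dist_sym u y); lia.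
    have := Mu w g; move: lt evw t1 t2 t3 Pu Pv.
    rewrite (dist_sym v w) (dist_sym v u) (dist_sym v y) (dist_sym u y); lia.
  - apply/forallP => w; apply/implyP => evw; rewrite leqNgt; apply/negP => lt.
    have t1 : dist e u w <= (dist e u v).+1 by apply: dist_edge.
    have t2 : dist e y w <= (dist e y v).+1 by apply: dist_edge.
    have t3 := dist_tri u y w.
    have g : on_geodesic e y u w.
      apply/eqP; move: lt t1 t2 t3 Pv; rewrite (dist_sym w u) (dist_sym v u); lia.
    have := Mv w g; move: lt t1 t2 t3 Pv; rewrite (dist_sym w u) (dist_sym v u); lia.
have /orP [uS|vS] := cov u v muv; apply/existsP.
  by exists u; rewrite uS /on_geodesic Pu eqxx.
exists v; rewrite vS /on_geodesic orbC; apply/orP; left; apply/eqP.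
have t1 := dist_tri u x v; have t2 := dist_tri x y v.
move: t1 t2 Pu Pv; rewrite (dist_sym y u) (dist_sym y x) (dist_sym x u); lia.
Qed.

Lemma strong_setT : strong_resolving e [set: T].
Proof.
apply/forallP => x; apply/forallP => y; apply/implyP => _; apply/existsP.
by exists x; rewrite in_setT /on_geodesic dist0 addn0 eqxx.
Qed.

Lemma sdimP : exists S, [/\ strong_resolving e S, sdim e = #|S| &
  forall S', strong_resolving e S' -> #|S| <= #|S'|].
Proof.
rewrite /sdim; case: arg_minnP; first exact: strong_setT.
by move=> S PS MS; exists S; split.
Qed.
End Dist.
Lemma partb (TG TH : finType) (eG : rel TG) (eH : rel TH) :
  connected_graph eG -> connected_graph eH ->
  SR_subgraph eH eG -> sdim eH <= sdim eG.
Proof.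
case=> [[_ sG] cG] [[_ sH] cH] [f [finj [fv fm]]].
have [S [SR -> _]] := sdimP cG.
have [S0 [_ -> M0]] := sdimP cH.
pose S' := [set x | SR_vertex eH x && (f x \in S)].
have cov : strong_resolving eH S'.
  apply: cover_strong => // u v muv.
  have := strong_cover sG cG SR (fm _ _ muv) => /orP [h|h]; apply/orP;
    [left|right]; rewrite inE h andbT; apply/existsP.
    by exists v.
  exists u; move: muv; rewrite /mmd eq_sym => /andP [/andP [-> ->] ->] //.
apply: leq_trans (M0 _ cov) _.
have inj : {in S' &, injective f}.
  by move=> a b; rewrite !inE => /andP [a1 _] /andP [b1 _]; apply: finj.
rewrite -(card_in_imset inj); apply: subset_leq_card.
by apply/subsetP => y /imsetP [x]; rewrite inE => /andP [_ h] ->.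
Qed.
Lemma oeqE m (i j : 'I_m) : (i == j) = (i == j :> nat). Proof. by []. Qed.

Lemma conn_pot (T : finType) (e : rel T) (x0 : T) (pot : T -> nat) :
  symmetric e -> (forall y, pot y = 0 -> y = x0) ->
  (forall y k, pot y = k.+1 -> exists z, e z y /\ pot z = k) ->
  forall x y, connect e x y.
Proof.
move=> sy p0 pS.
have H : forall y, connect e x0 y.
  move=> y; move Hk : (pot y) => k; elim: k y Hk => [|k IH] y Hk.
    by rewrite (p0 _ Hk) connect0.
  have [z [ezy pz]] := pS _ _ Hk.
  by apply: connect_trans (IH _ pz) (connect1 ezy).
move=> x y; apply: connect_trans (H y).
by rewrite (sym_connect_sym sy).
Qed.

Lemma dist_char (T : finType) (e : rel T) (x : T) (f : T -> nat) :
  symmetric e -> (forall x y, connect e x y) ->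
  f x = 0 -> (forall y, f y = 0 -> y = x) ->
  (forall y z, e z y -> f y <= (f z).+1) ->
  (forall y k, f y = k.+1 -> exists z, e z y /\ f z = k) ->
  forall y, dist e x y = f y.
Proof.
move=> sy cn fx f0 fL fS y; apply/eqP; rewrite eqn_leq; apply/andP; split.
  move Hk : (f y) => k; elim: k y Hk => [|k IH] y Hk.
    by rewrite (f0 _ Hk) (dist0 cn).
  have [z [ezy pz]] := fS _ _ Hk.
  have := IH _ pz; have := @dist_edge _ _ cn x _ _ ezy; lia.
move Hk : (dist e x y) => k; elim: k y Hk => [|k IH] y Hk.
  by rewrite (dist0_eq cn Hk) fx.
have [z [ezy pz]] := dist_pred cn Hk.
have := IH _ pz; have := fL _ _ ezy; lia.
Qed.

Lemma leaf_md (T : finType) (e : rel T) (u v : T) :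
  symmetric e -> (forall x y, connect e x y) ->
  (forall w w', e u w -> e u w' -> w = w') -> v != u ->
  forall w, e u w -> dist e w v <= dist e u v.
Proof.
move=> sy cn uniqw nvu w euw.
move Hk : (dist e u v) => k; case: k Hk => [|k] Hk.
  by move: nvu; rewrite (dist0_eq cn Hk) eqxx.
have [w0 [euw0 d0]] := dist_pred_l sy cn Hk.
by rewrite (uniqw _ _ euw euw0) d0.
Qed.

Lemma leaf_cover (T : finType) (e : rel T) (S : {set T}) (u v : T) :
  symmetric e -> (forall x y, connect e x y) -> strong_resolving e S ->
  (forall w w', e u w -> e u w' -> w = w') ->
  (forall w w', e v w -> e v w' -> w = w') -> u != v ->
  (u \in S) || (v \in S).
Proof.
move=> sy cn /forallP sr lu lv nuv.
have /implyP/(_ nuv)/existsP [z /andP [zS /orP [g|g]]] := forallP (sr u) v.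
- have zu : z = u.
    apply: (maxd_geo sy cn (v:=v)); last by apply/eqP.
    by apply: leaf_md => //; rewrite eq_sym.
  by rewrite -zu zS.
- have zv : z = v.
    apply: (maxd_geo sy cn (v:=u)); last by apply/eqP.
    exact: leaf_md.
  by rewrite -zv zS orbT.
Qed.

Definition lad n : rel ('I_n.+1 * bool) := fun x y =>
  ((x.1 == y.1) && (x.2 != y.2)) ||
  ((x.2 == y.2) && ((x.1.+1 == y.1) || (y.1.+1 == x.1))).

Definition comb n : rel ('I_n.+1 * bool) := fun x y =>
  ((x.1 == y.1) && (x.2 != y.2)) ||
  (~~ x.2 && ~~ y.2 && ((x.1.+1 == y.1) || (y.1.+1 == x.1))).

Arguments lad : clear implicits.
Arguments comb : clear implicits.

Lemma lad_simple n : simple_graph (lad n).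
Proof.
split.
  by move=> [i a]; rewrite /lad /= eqxx /=; lia.
move=> [i a] [j b]; rewrite /lad /= !oeqE.
by case: a; case: b => /=; apply/idP/idP; lia.
Qed.

Lemma comb_simple n : simple_graph (comb n).
Proof.
split.
  by move=> [i a]; rewrite /comb /= eqxx /=; lia.
move=> [i a] [j b]; rewrite /comb /= !oeqE.
by case: a; case: b => /=; apply/idP/idP; lia.
Qed.
Definition ldf n (x y : 'I_n.+1 * bool) : nat :=
  (x.1 - y.1) + (y.1 - x.1) + (x.2 != y.2).

Arguments ldf : clear implicits.

Lemma ldf0 n x y : ldf n x y = 0 -> y = x.
Proof.
case: x y => [i a] [j b]; rewrite /ldf /= => h.
have ij : j = i by apply: val_inj => /=; case: (a != b) h; lia.
by rewrite ij; case: a b h => [] [] //=; rewrite ?addn1.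
Qed.

Lemma ldfL n x y z : lad n z y -> ldf n x y <= (ldf n x z).+1.
Proof.
case: x y z => [i a] [j b] [k c]; rewrite /lad /ldf /= oeqE.
by case: a; case: b; case: c => /=; lia.
Qed.

Lemma ldfS n x y k : ldf n x y = k.+1 -> exists z, lad n z y /\ ldf n x z = k.
Proof.
case: x y => [i a] [j b]; rewrite /ldf /= => H.
case: (boolP (a == b)) => ab.
  move: H; rewrite ab addn0 => H.
  case: (ltnP j i) => ji.
    have jn : j.+1 < n.+1 by apply: leq_trans (ltn_ord i).
    exists (inord j.+1, b); rewrite /lad /= inordK // !eqxx /=; split; first lia.
    move: H; case: (a == b) ab => //= _; lia.
  have j0 : 0 < j by move: H; lia.
  have jn : j.-1 < n.+1 by apply: leq_ltn_trans (ltn_ord j); lia.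
  exists (inord j.-1, b); rewrite /lad /= inordK // !eqxx /=; split; first lia.
  move: H; case: (a == b) ab => //= _; lia.
exists (j, a); split; first by rewrite /lad /= !eqxx ab.
move: H; rewrite /ldf /= eqxx; case: (a != b) ab => //= _; lia.
Qed.

Lemma lad_conn n : forall x y, connect (lad n) x y.
Proof.
apply: (@conn_pot _ _ (ord0, false) (ldf n (ord0, false))).
- by have [] := lad_simple n.
- by move=> y /ldf0.
- exact: ldfS.
Qed.

Lemma lad_dist n x y : dist (lad n) x y = ldf n x y.
Proof.
have [_ sy] := lad_simple n.
apply: dist_char => //.
- exact: lad_conn.
- by rewrite /ldf !subnn eqxx.
- by move=> z /ldf0.
- by move=> z w; apply: ldfL.
- exact: ldfS.
Qed.
Lemma lad_sr n : strong_resolving (lad n) [set (ord0, false); (ord0, true)].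
Proof.
apply/forallP => [[i a]]; apply/forallP => [[j b]]; apply/implyP => _.
apply/existsP; case: (leqP i j) => ij.
  exists (ord0, a); rewrite !inE; apply/andP; split; first by case: a.
  apply/orP; left; rewrite /on_geodesic !lad_dist /ldf /=.
  by case: a; case: b => /=; lia.
exists (ord0, b); rewrite !inE; apply/andP; split; first by case: b.
apply/orP; right; rewrite /on_geodesic !lad_dist /ldf /=.
by case: a; case: b => /=; lia.
Qed.

Lemma lad_sdim n : 0 < sdim (lad n) <= 2.
Proof.
have [S [SR -> M]] := sdimP (@lad_conn n).
apply/andP; split.
  rewrite lt0n; apply/negP => /eqP /cards0_eq S0; move: SR; rewrite S0.
  move=> /forallP /(_ (ord0, false)) /forallP /(_ (ord0, true)) /implyP.
  by move=> /(_ isT) /existsP [z]; rewrite inE.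
by have := M _ (lad_sr n); rewrite cards2.
Qed.

Lemma comb_conn n : forall x y, connect (comb n) x y.
Proof.
apply: (@conn_pot _ _ (ord0, false) (fun y => y.1 + y.2)).
- by have [] := comb_simple n.
- move=> [j b] /= h; congr pair; last by case: b h; rewrite ?addn1.
  by apply: val_inj => /=; case: b h => /=; lia.
- move=> [j b] k /= h; case: b h => h.
    exists (j, false); rewrite /comb /= eqxx /=; split => //; lia.
  have kn : k < n.+1 by apply: leq_trans (ltn_ord j); lia.
  exists (inord k, false); rewrite /comb /= inordK //; split; first lia.
  by rewrite addn0.
Qed.

Lemma comb_leaf n (i : 'I_n.+1) : forall w w', comb n (i, true) w ->
  comb n (i, true) w' -> w = w'.
Proof.
suff H : forall w, comb n (i, true) w -> w = (i, false).
  by move=> w w' /H -> /H ->.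
move=> [j c]; rewrite /comb /= ?andbF ?orbF => /andP [/eqP -> ].
by case: c.
Qed.

Lemma comb_sdim n : n <= sdim (comb n).
Proof.
have [_ sy] := comb_simple n.
have [S [SR -> _]] := sdimP (@comb_conn n).
pose L := [set (i, true) | i : 'I_n.+1].
have cL : #|L| = n.+1.
  rewrite card_imset ?card_ord //; by move=> a b [].
have dL : #|L :\: S| <= 1.
  rewrite leqNgt; apply/negP => /card_gt1P [x [y [xL yL nxy]]].
  move: xL yL; rewrite !in_setD => /andP [xS /imsetP [i _ xi]] /andP [yS /imsetP [j _ yj]].
  have := leaf_cover sy (@comb_conn n) SR (u:=x) (v:=y).
  rewrite xi yj in nxy *; move=> /(_ (@comb_leaf n i) (@comb_leaf n j) nxy).
  by rewrite -xi -yj (negbTE xS) (negbTE yS).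
have := cardsID S L; have := subset_leq_card (subsetIr L S); lia.
Qed.

Lemma comb_sub n : subgraph (comb n) (lad n).
Proof.
exists (fun x => x); split; first by move=> ? ?.
move=> [i a] [j b]; rewrite /comb /lad /= !oeqE.
by case: a; case: b => /=; lia.
Qed.
Theorem mainTheorem1 :
  (forall M : R, (0 < M)%R ->
     exists (TH TG : finType) (eH : rel TH) (eG : rel TG),
       [/\ connected_graph eH, connected_graph eG, subgraph eH eG,
           (0 < sdim eG)%N &
           (M < INR (sdim eH) / INR (sdim eG))%R])
  /\
  (forall (TG TH : finType) (eG : rel TG) (eH : rel TH),
     connected_graph eG -> connected_graph eH ->
     SR_subgraph eH eG -> (sdim eH <= sdim eG)%N).
Proof.
split; last exact: partb.
move=> M M0.
have [N HN] := INR_unbounded (2 * M)%R.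
exists _, _, (comb N), (lad N).
have /andP [g0 g2] := lad_sdim N.
have h := comb_sdim N.
split.
- by split; [exact: comb_simple | exact: comb_conn].
- by split; [exact: lad_simple | exact: lad_conn].
- exact: comb_sub.
- exact: g0.
have ha : (INR N <= INR (sdim (comb N)))%R by apply: le_INR; apply/leP.
have hb : (INR (sdim (lad N)) <= 2)%R.
  by have := @le_INR _ 2 (elimT leP g2); rewrite /=; lra.
have hb0 : (0 < INR (sdim (lad N)))%R by apply: lt_0_INR; apply/ltP.
move: ha hb hb0 HN M0.
generalize (INR (sdim (comb N))) (INR (sdim (lad N))) (INR N) => a b n ha hb hb0 HN M0.
have Hab : (M * b < a)%R.
  have : (0 <= M * (2 - b))%R by apply: Rmult_le_pos; lra.
  lra.
have ib : (0 < / b)%R by apply: Rinv_0_lt_compat.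
have : (M * b * / b < a * / b)%R by apply: Rmult_lt_compat_r.
rewrite /Rdiv Rmult_assoc Rinv_r ?Rmult_1_r //; lra.
Qed.
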